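(* Consider the two-player game (defined in the context) in which each player, after learning its valuation, chooses a latency $t>0$ and a bid $m\ge0$, and let $b(g)=\int_0^1 m(v)\,dv$ be the expected equilibrium bid of a player in the symmetric equilibrium with strictly increasing score in which a zero-valuation type invests nothing. Then $\lim_{g\to\infty}b(g)=\frac16$, and $b(g)$ is an increasing function of $g$ for all sufficiently large $g$.
   Context: Fix $g>0$. Two players have valuations $v_1,v_2$ drawn independently and uniformly from $[0,1]$. After observing its valuation, a player chooses a bid $m\ge0$ and a latency $t>0$ (the time after the arbitrage opportunity at which its transaction reaches the sequencer), at total cost $m+\frac1t$. Its score is $s=\frac{gm}{m+1}-t$. The player with the higher score has its transaction ordered first and receives its valuation; costs are paid regardless, so the payoff is $v_i\cdot\mathbf{1}[\text{higher score}]-m-\frac1t$. In equilibrium each type $v$ chooses a cost-minimizing pair $(m(v),t(v))$ producing its equilibrium score $s(v)$. *)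

(* Defs.v *)
From HB Require Import structures.
From mathcomp Require Import all_boot all_order all_algebra.
From mathcomp Require Import all_classical all_reals all_analysis.
Set Implicit Arguments. Unset Strict Implicit. Unset Printing Implicit Defensive.
Import Order.TTheory GRing.Theory Num.Theory.
Import numFieldNormedType.Exports.
Local Open Scope classical_set_scope.
Local Open Scope ring_scope.

Definition score {R : realType} (g m t : R) : R := g * m / (m + 1) - t.

Definition cost {R : realType} (m t : R) : R := m + t^-1.

(* Probability that an opponent using strategy (bid, lat) (types uniform on
   [0,1], type 0 being a null event) has a strictly lower score than s. *)
Definition win_prob {R : realType} (g : R) (bid lat : R -> R) (s : R) : R :=
  fine (lebesgue_measure
          [set w : R | 0 < w <= 1 /\ score g (bid w) (lat w) < s]).

Definition payoff {R : realType} (g : R) (bid lat : R -> R) (v m t : R) : R :=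
  v * win_prob g bid lat (score g m t) - cost m t.

(* (bid, lat) is a symmetric equilibrium with strictly increasing score in
   which the zero-valuation type invests nothing (its cost tends to 0). *)
Definition is_selected_eq {R : realType} (g : R) (bid lat : R -> R) : Prop :=
  (forall v, 0 < v <= 1 -> 0 <= bid v /\ 0 < lat v) /\
  (forall v, 0 < v <= 1 -> forall m t, 0 <= m -> 0 < t ->
      payoff g bid lat v m t <= payoff g bid lat v (bid v) (lat v)) /\
  (forall v w, 0 < v -> v < w -> w <= 1 ->
      score g (bid v) (lat v) < score g (bid w) (lat w)) /\
  (cost (bid v) (lat v) @[v --> 0^'+] --> (0 : R)).

Definition exp_bid {R : realType} (bid : R -> R) : R :=
  Rintegral lebesgue_measure `[0, 1] bid.

(* Main.v *)
Set Warnings "-all".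
Require Import Defs.
From HB Require Import structures.
From mathcomp Require Import all_boot all_order all_algebra.
From mathcomp Require Import all_classical all_reals all_analysis.
From mathcomp Require Import ring lra.
Import Order.TTheory GRing.Theory Num.Theory.
Import numFieldNormedType.Exports.
Local Open Scope classical_set_scope.
Local Open Scope ring_scope.
Set Implicit Arguments. Unset Strict Implicit. Unset Printing Implicit Defensive.
Section Alg.
Variable R : realType.
Implicit Types a g m C x y : R.

Definition mstar (g C : R) : R :=
  Num.max 0 ((Num.sqrt g * C - 1) / (Num.sqrt g + 1)).
Definition sc (g m C : R) : R := score g m (C - m)^-1.

Lemma cs_ineq a x y : 0 < a -> 0 < x -> 0 < y -> a * y != x ->
  (a + 1) ^+ 2 / (x + y) < a ^+ 2 / x + 1 / y.
Proof.
move=> a0 x0 y0 ne.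
have xy0 : 0 < x + y by lra.
rewrite ltr_pdivrMr // .
have -> : (a ^+ 2 / x + 1 / y) * (x + y) = (a^+2 * y ^+ 2 + x ^+ 2 + (a^+2 + 1) * x * y) / (x * y).
  by field; apply/andP; split; rewrite gt_eqF.
rewrite ltr_pdivlMr ?mulr_gt0 //.
have h : (a * y - x) ^+ 2 != 0 by rewrite sqrf_eq0 subr_eq0.
have h2 := sqr_ge0 (a * y - x).
have h3 : 0 < (a * y - x) ^+ 2 by rewrite lt_def h h2.
nra.
Qed.

Lemma sqrt_pos {g : R} : 0 < g -> 0 < Num.sqrt g.
Proof. by move=> g0; rewrite sqrtr_gt0. Qed.

Lemma mstar_ge0 g C : 0 <= mstar g C.
Proof. by rewrite /mstar le_max lexx. Qed.

Lemma mstar_lt g C : 0 < g -> 0 < C -> mstar g C < C.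
Proof.
move=> g0 C0; have a0 := sqrt_pos g0; rewrite /mstar.
move: (Num.sqrt g) a0 => a a0.
rewrite gt_max C0 /=.
have a1 : 0 < a + 1 by lra.
rewrite ltr_pdivrMr //.
rewrite mulrDr mulr1 [C * a]mulrC; lra.
Qed.

Lemma opt g C m : 0 < g -> 0 < C -> 0 <= m -> m < C -> m != mstar g C ->
  sc g m C < sc g (mstar g C) C.
Proof.
move=> g0 C0 m0 mC ne.
have a0 := sqrt_pos g0.
have ga : g = Num.sqrt g ^+ 2 by rewrite sqr_sqrtr // ltW.
move: ne; rewrite /sc /score /mstar.
move: (Num.sqrt g) a0 ga => a a0 ->.
have [h|h] := leP ((a * C - 1) / (a + 1)) 0.
- move=> ne.
  have mp : 0 < m by rewrite lt_def ne m0.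
  rewrite mulr0 mul0r subr0 sub0r.
  have h1 : a * C - 1 <= 0.
    by move: h; rewrite pmulr_lle0 // invr_gt0; lra.
  have e1 : a ^+ 2 * m / (m + 1) <= a ^+ 2 * m.
    rewrite ler_pdivrMr; last lra.
    have : 0 <= a ^+ 2 * m by rewrite mulr_ge0 // sqr_ge0.
    nra.
  have e2 : (C - m)^-1 - C^-1 = m / (C * (C - m)).
    by field; apply/andP; split; rewrite gt_eqF // subr_gt0.
  have e3 : a ^+ 2 * m < m / (C * (C - m)).
    rewrite ltr_pdivlMr; last by rewrite mulr_gt0 // subr_gt0.
    have aC0 : 0 <= a * C by rewrite mulr_ge0 // ltW.
    have X1 : a * C * (a * C) <= 1 by nra.
    have X2 : 0 < a ^+2 * m * C * m by rewrite !mulr_gt0 // exprn_gt0.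
    have -> : a ^+ 2 * m * (C * (C - m)) = (a * C) * (a * C) * m - a ^+ 2 * m * C * m by ring.
    have : (a * C) * (a * C) * m <= m by nra.
    lra.
  lra.
- move=> ne.
  set ms := (a * C - 1) / (a + 1) in ne h *.
  have e1 : a ^+ 2 * ms / (ms + 1) - (C - ms)^-1 = a ^+ 2 - (a + 1) ^+ 2 / (C + 1).
    rewrite /ms; field.
    rewrite !gt_eqF //; try lra.
    have : 0 < a * C by rewrite mulr_gt0.
    lra.
  have e2 : a ^+ 2 * m / (m + 1) - (C - m)^-1 = a ^+ 2 - (a ^+ 2 / (m + 1) + 1 / (C - m)).
    field; rewrite !gt_eqF //; lra.
  rewrite e1 e2.
  have := @cs_ineq a (m + 1) (C - m) a0 ltac:(lra) ltac:(lra).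
  have -> : m + 1 + (C - m) = C + 1 by ring.
  move=> H; have : (a + 1) ^+ 2 / (C + 1) < a ^+ 2 / (m + 1) + 1 / (C - m).
    apply: H; apply/negP => /eqP E; move/eqP: ne; apply.
    have E' : a * C - 1 = m * (a + 1).
      by rewrite mulrBr in E; rewrite mulrDr mulr1 [m * a]mulrC; lra.
    by rewrite /ms E' mulfK // gt_eqF //; lra.
  lra.
Qed.
End Alg.
Section Meas.
Variable R : realType.

Lemma leb_mono {A B : set R} : A `<=` B ->
  (lebesgue_measure A <= lebesgue_measure B)%E.
Proof.
move=> AB.
rewrite /lebesgue_measure /lebesgue_stieltjes_measure /measure_extension.
exact: le_mu_ext.
Qed.

Lemma fine_bound (e : \bar R) (x : R) : (0 <= e)%E -> (e <= x%:E)%E -> fine e <= x.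
Proof.
by case: e => [r| |] //= _; rewrite lee_fin.
Qed.

Lemma win_le (A : set R) (x : R) : 0 <= x -> A `<=` `]0, x[ ->
  fine (lebesgue_measure A) <= x.
Proof.
move=> x0 Ax; apply: fine_bound; first exact: measure_ge0.
apply: (le_trans (leb_mono Ax)).
rewrite lebesgue_measure_itv /=.
case: ifP => _; last by rewrite lee_fin.
by rewrite -EFinD subr0.
Qed.

Lemma leb_itv_oo (x : R) : 0 <= x -> fine (lebesgue_measure (`]0, x[ : set R)) = x.
Proof.
move=> x0; rewrite lebesgue_measure_itv /=.
case: ifP => h; first by rewrite -EFinD subr0.
by apply/eqP; rewrite eq_sym eq_le x0 /= leNgt; move: h; rewrite lte_fin => ->.
Qed.

End Meas.
Section Exist.
Variable R : realType.
Implicit Types g m t C v w : R.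

Lemma sc_mono g m c C : 0 <= m -> m < c -> c <= C -> sc g m c <= sc g m C.
Proof.
move=> m0 mc cC; rewrite /sc /score lerD2l lerN2.
by rewrite lef_pV2 ?posrE ?subr_gt0 //; [lra | lra].
Qed.

Lemma sc_mono_lt g m c C : 0 <= m -> m < c -> c < C -> sc g m c < sc g m C.
Proof.
move=> m0 mc cC; rewrite /sc /score ltrD2l ltrN2.
by rewrite ltf_pV2 ?posrE ?subr_gt0 //; [lra | lra].
Qed.

Lemma score_sc g m t : 0 < t -> score g m t = sc g m (m + t^-1).
Proof. by move=> t0; rewrite /sc addrC addKr invrK. Qed.

Lemma sc_le_opt g m C : 0 < g -> 0 < C -> 0 <= m -> m < C ->
  sc g m C <= sc g (mstar g C) C.
Proof.
move=> g0 C0 m0 mC; have [->|ne] := eqVneq m (mstar g C); first by [].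
by apply/ltW/opt.
Qed.

Lemma score_le g m t C : 0 < g -> 0 <= m -> 0 < t -> 0 < C -> m + t^-1 <= C ->
  score g m t <= sc g (mstar g C) C.
Proof.
move=> g0 m0 t0 C0 mC; rewrite score_sc //.
have ti : 0 < t^-1 by rewrite invr_gt0.
apply: (le_trans (sc_mono g m0 _ mC)); first lra.
apply: sc_le_opt => //; lra.
Qed.

Lemma sc_opt_lt g C1 C2 : 0 < g -> 0 < C1 -> C1 < C2 ->
  sc g (mstar g C1) C1 < sc g (mstar g C2) C2.
Proof.
move=> g0 C10 C12.
have h0 := mstar_ge0 g C1; have h1 := mstar_lt g0 C10.
apply: (lt_le_trans (sc_mono_lt g h0 h1 C12)).
apply: sc_le_opt => //; lra.
Qed.

Definition bidE g v := mstar g (v ^+ 2 / 2).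
Definition latE g v := (v ^+ 2 / 2 - bidE g v)^-1.

Lemma win_own g (bid lat : R -> R) v :
  (forall v w, 0 < v -> v < w -> w <= 1 ->
      score g (bid v) (lat v) < score g (bid w) (lat w)) ->
  0 < v <= 1 -> win_prob g bid lat (score g (bid v) (lat v)) = v.
Proof.
move=> inc /andP[v0 v1]; rewrite /win_prob.
have -> : [set w : R | 0 < w <= 1 /\ score g (bid w) (lat w) < score g (bid v) (lat v)]
    = `]0, v[%classic.
  apply/seteqP; split => w /=.
  - move=> [/andP[w0 w1] lt]; rewrite in_itv /= w0 /=.
    rewrite ltNge; apply/negP => vw.
    move: vw; rewrite le_eqVlt => /orP[/eqP E|vw].
      by move: lt; rewrite E ltxx.
    by have := inc _ _ v0 vw w1; lra.
  - rewrite in_itv /= => /andP[w0 wv]; split; first by rewrite w0 /=; lra.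
    exact: inc.
by rewrite leb_itv_oo // ltW.
Qed.

End Exist.
Section Exist2.
Variable R : realType.
Implicit Types g m t C v w : R.

Lemma costE g v : 0 < g -> 0 < v -> cost (bidE g v) (latE g v) = v ^+ 2 / 2.
Proof.
move=> g0 v0; rewrite /cost /latE invrK; ring.
Qed.

Lemma C_pos v : 0 < v -> 0 < v ^+ 2 / 2.
Proof. by move=> v0; rewrite divr_gt0 // exprn_gt0. Qed.

Lemma existence g : 0 < g -> is_selected_eq g (bidE g) (latE g).
Proof.
move=> g0.
have inc : forall v w, 0 < v -> v < w -> w <= 1 ->
    score g (bidE g v) (latE g v) < score g (bidE g w) (latE g w).
  move=> v w v0 vw w1.
  apply: (sc_opt_lt g0 (C_pos v0)).
  by rewrite ltr_pM2r // ltrXn2r //; lra.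
split; [|split; [|split]].
- move=> v /andP[v0 v1]; split; first exact: mstar_ge0.
  by rewrite invr_gt0 subr_gt0 mstar_lt // C_pos.
- move=> v /andP[v0 v1] m t m0 t0.
  rewrite /payoff (win_own inc) ?v0 ?v1 // costE //.
  set c := cost m t.
  have c0 : 0 < c by rewrite /c /cost; have := invr_gt0 t; rewrite t0; lra.
  set P := win_prob g (bidE g) (latE g) (score g m t).
  set q := Num.sqrt (2 * c).
  have q0 : 0 <= q by exact: sqrtr_ge0.
  have qq : q ^+ 2 = 2 * c by rewrite sqr_sqrtr //; lra.
  have P0 : 0 <= P by exact: fine_ge0 (measure_ge0 _ _).
  have Pq : P <= q.
    apply: win_le => // w /= [/andP[w0 w1] lt].
    rewrite in_itv /= w0 /=; rewrite ltNge; apply/negP => qw.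
    have cw : c <= w ^+ 2 / 2.
      have : q ^+ 2 <= w ^+ 2 by rewrite ler_pXn2r // ?nnegrE; lra.
      lra.
    have := score_le g0 m0 t0 (C_pos w0) cw.
    rewrite /bidE /latE /sc in lt *; lra.
  have : P ^+ 2 <= 2 * c by rewrite -qq ler_pXn2r.
  have := sqr_ge0 (v - P).
  nra.
- exact: inc.
- apply: (@cvg_trans _ ((fun v : R => v ^+ 2 / 2) @ (0 : R)^'+)).
    apply: near_eq_cvg; near=> v.
    by rewrite costE //.
  have H : (fun v : R => v ^+ 2 / 2) @ (0 : R) --> ((0 : R) ^+ 2 / 2).
    by apply: cvgMr_tmp; exact: exprn_continuous.
  rewrite expr0n mul0r in H.
  exact: cvg_at_right_filter.
Unshelve. all: by end_near.
Qed.

End Exist2.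
Section Uniq.
Variable R : realType.
Implicit Types g m t C v w : R.

Lemma flat (D : R -> R) (K : R) :
  (forall v w, 0 < v <= 1 -> 0 < w <= 1 -> `|D w - D v| <= K * (w - v) ^+ 2) ->
  forall v w, 0 < v <= 1 -> 0 < w <= 1 -> D w = D v.
Proof.
move=> H.
have Hn : forall n v w, 0 < v <= 1 -> 0 < w <= 1 ->
    `|D w - D v| <= K * (w - v) ^+ 2 / 2 ^+ n.
  elim=> [|n IH] v w hv hw; first by rewrite expr0 divr1; exact: H.
  set u := (v + w) / 2.
  have hu : 0 < u <= 1 by move: hv hw => /andP[? ?] /andP[? ?]; apply/andP; rewrite /u; split; lra.
  have e1 := IH u w hu hw; have e2 := IH v u hv hu.
  have tri : `|D w - D v| <= `|D w - D u| + `|D u - D v|.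
    by rewrite (_ : D w - D v = (D w - D u) + (D u - D v)) ?ler_normD //; ring.
  apply: (le_trans tri); apply: (le_trans (lerD e1 e2)).
  rewrite /u (exprS (2 : R) n) le_eqVlt; apply/orP; left; apply/eqP; field.
  by rewrite expf_neq0.
move=> v w hv hw; apply/eqP; rewrite -subr_eq0 -normr_eq0.
apply/eqP; apply/le_anti; rewrite normr_ge0 andbT.
rewrite leNgt; apply/negP => dpos.
set d := `|D w - D v| in dpos.
set X := K * (w - v) ^+ 2.
have X0 : 0 <= X by apply: le_trans (ltW dpos) _; have := Hn 0%N v w hv hw; rewrite expr0 divr1.
have Xd : 0 <= X / d by rewrite divr_ge0 // ltW.
set n := Num.Def.archi_bound (X / d).
have hn := archi_boundP Xd; rewrite -/n in hn.
have h2 : (n%:R : R) <= 2 ^+ n.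
  by rewrite -natrX ler_nat ltnW // ltn_expl.
have h3 := Hn n v w hv hw; rewrite -/d -/X in h3.
have p2 : 0 < (2 : R) ^+ n by rewrite exprn_gt0.
move: h3; rewrite ler_pdivlMr // => h3.
move: hn; rewrite ltr_pdivrMr // => hn.
nra.
Qed.

End Uniq.
Section Uniq2.
Variable R : realType.
Implicit Types g m t C v w : R.

Lemma eq_cost g (bid lat : R -> R) : 0 < g -> is_selected_eq g bid lat ->
  forall v, 0 < v <= 1 -> cost (bid v) (lat v) = v ^+ 2 / 2.
Proof.
move=> g0 [pos [ic [inc lim]]].
pose C v := cost (bid v) (lat v).
have IC : forall v w, 0 < v <= 1 -> 0 < w <= 1 -> v * w - C w <= v * v - C v.
  move=> v w hv hw.
  have := ic v hv (bid w) (lat w) (pos w hw).1 (pos w hw).2.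
  by rewrite /payoff !(win_own inc).
pose D v := C v - v ^+ 2 / 2.
have HD : forall v w, 0 < v <= 1 -> 0 < w <= 1 -> `|D w - D v| <= 2^-1 * (w - v) ^+ 2.
  move=> v w hv hw; have h1 := IC v w hv hw; have h2 := IC w v hw hv.
  rewrite ler_norml /D; apply/andP; split; nra.
have Dc := flat HD.
set D1 := D 1.
have D10 : D1 = 0.
  have [//|ne] := eqVneq D1 0.
  have e0 : 0 < `|D1| / 2 by rewrite divr_gt0 // normr_gt0.
  have H1 := (cvgrPdist_lt _ _).1 lim _ e0; move: H1 => /(_ (at_right_proper_filter _)) H1.
  have H2 : \forall t \near (0 : R)^'+, t < Num.min 1 (`|D1| / 2).
    by apply: nbhs_right_lt; rewrite lt_min ltr01 e0.
  have H3 := nbhs_right_gt (0 : R).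
  have [v [h1 [h2 h3]]] := @filter_ex _ _ (at_right_proper_filter (0:R)) _ (filterI H1 (filterI H2 H3)).
  move: h2; rewrite lt_min => /andP[v1 ve].
  have hv : 0 < v <= 1 by rewrite h3 ltW.
  have Dv : D v = D1 by rewrite /D1 (Dc 1 v) // lexx ltr01.
  move: Dv h1; rewrite /D /C sub0r normrN => Dv h1.
  have : `|D1| <= `|cost (bid v) (lat v)| + v ^+ 2 / 2.
    rewrite -Dv; apply: (le_trans (ler_normB _ _)).
    by rewrite [`|v ^+ 2 / 2|]ger0_norm // divr_ge0 // sqr_ge0.
  have : v ^+ 2 / 2 < `|D1| / 2.
    have : v ^+ 2 <= v by rewrite expr2 ger_pMr //; lra.
    lra.
  lra.
move=> v hv.
have := Dc 1 v _ hv; rewrite -/D1 D10 ?lexx ?ltr01 // /D /C => /(_ isT) /eqP.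
by rewrite subr_eq0 => /eqP.
Qed.

Lemma eq_bid g (bid lat : R -> R) : 0 < g -> is_selected_eq g bid lat ->
  forall v, 0 < v <= 1 -> bid v = bidE g v.
Proof.
move=> g0 E v hv.
have Cv := eq_cost g0 E hv.
case: E => [pos [ic [inc lim]]].
have [m0 t0] := pos v hv.
have [//|ne] := eqVneq (bid v) (bidE g v).
exfalso.
set m := bid v in m0 Cv ne; set t := lat v in t0 Cv.
set C := v ^+ 2 / 2 in Cv ne.
have C0 : 0 < C by apply: C_pos; case/andP: hv.
have ti : 0 < t^-1 by rewrite invr_gt0.
have mC : m < C by rewrite -Cv /cost; lra.
have s_eq : score g m t = sc g m C by rewrite -Cv /cost score_sc.
set ms := mstar g C.
have hopt := opt g0 C0 m0 mC ne.
set s := score g m t in s_eq.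
have ms0 := mstar_ge0 g C; have msC := mstar_lt g0 C0.
set t' := g * ms / (ms + 1) - s.
have t'gt : (C - ms)^-1 < t' by move: hopt; rewrite /t' -s_eq /sc /score -/ms; lra.
have ci0 : 0 < (C - ms)^-1 by rewrite invr_gt0 subr_gt0.
have t'0 : 0 < t' by lra.
have hsc : score g ms t' = s by rewrite /score /t'; ring.
have := ic v hv ms t' ms0 t'0.
rewrite /payoff hsc -/m -/t -/s /cost.
have : t'^-1 < C - ms.
  by rewrite -[C - ms]invrK ltf_pV2 ?posrE // subr_gt0.
move: Cv; rewrite /cost => Cv.
lra.
Qed.

End Uniq2.
Section Integ.
Variable R : realType.
Implicit Types g m t C v w : R.
Local Notation mu := (@lebesgue_measure R).

Lemma int_3x2 : Rintegral mu `[0, 1] (fun x : R => 3 * x ^+ 2) = 1.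
Proof.
rewrite /Rintegral.
rewrite (@continuous_FTC2 R (fun x : R => 3 * x ^+ 2) (fun x : R => x ^+ 3) 0 1) //.
- by rewrite expr1n expr0n /= subr0.
- apply: continuous_subspaceT => x.
  by apply: cvgMl_tmp; exact: exprn_continuous.
- split.
  + by move=> x _; exact: exprn_derivable.
  + by apply: cvg_at_right_filter; exact: exprn_continuous.
  + by apply: cvg_at_left_filter; exact: exprn_continuous.
- move=> x _; rewrite exp_derive1 /=.
  by [].
Qed.


Lemma integ_c (f : R -> R) : continuous f -> mu.-integrable `[0, 1] (EFin \o f).
Proof.
move=> cf; apply: continuous_compact_integrable; first exact: segment_compact.
exact: continuous_subspaceT.
Qed.

Lemma cont_q : continuous (fun x : R => x ^+ 2 / 2).
Proof. by move=> x; apply: cvgMr_tmp; exact: exprn_continuous. Qed.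

Lemma cont_3x2 : continuous (fun x : R => 3 * x ^+ 2).
Proof. by move=> x; apply: cvgMl_tmp; exact: exprn_continuous. Qed.

Lemma int_q : Rintegral mu `[0, 1] (fun x : R => x ^+ 2 / 2) = 6^-1.
Proof.
rewrite (@eq_Rintegral _ _ _ mu _ (fun x => 6^-1 * (3 * x ^+ 2))); last first.
  by move=> x _; field.
by rewrite RintegralZl //= ?int_3x2 ?mulr1 //; exact: integ_c cont_3x2.
Qed.

Lemma cont_bidE g : continuous (bidE g).
Proof.
move=> x; rewrite /bidE /mstar.
apply: (@continuous_max R R (fun=> 0)
   (fun v => (Num.sqrt g * (v ^+ 2 / 2) - 1) / (Num.sqrt g + 1))).
  exact: cvg_cst.
apply: cvgMr_tmp; apply: cvgB; last exact: cvg_cst.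
by apply: cvgMl_tmp; exact: cont_q.
Qed.

Lemma exp_bid_eq g (bid lat : R -> R) : 0 < g -> is_selected_eq g bid lat ->
  exp_bid bid = Rintegral mu `[0, 1] (bidE g).
Proof.
move=> g0 E; have hb := eq_bid g0 E.
have mE : measurable_fun (`]0, 1]%classic : set R) (bidE g).
  have := measurable_realfun.continuous_measurable_fun (@cont_bidE g).

  by apply: measurable_funS.
have mb : measurable_fun (`]0, 1]%classic : set R) bid.
  apply: eq_measurable_fun mE => x; rewrite inE /= in_itv /= => hx.
  by rewrite hb.
rewrite /exp_bid /Rintegral -integral_itv_obnd_cbnd; last exact/measurable_realfun.measurable_EFinP.
rewrite -[in RHS]integral_itv_obnd_cbnd; last exact/measurable_realfun.measurable_EFinP.
congr fine; apply: eq_integral => x; rewrite inE /= in_itv /= => hx.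
by rewrite hb.
Qed.

End Integ.
Section Final.
Variable R : realType.
Implicit Types g m t C v w : R.
Local Notation mu := (@lebesgue_measure R).

Definition bE g := Rintegral mu `[0, 1] (bidE g).

Lemma mu01 : fine (mu `[0, 1]) = 1.
Proof. by rewrite lebesgue_measure_itv /= lte_fin ltr01 -EFinD subr0. Qed.

Lemma integ_cst (K : R) : mu.-integrable `[0, 1] (EFin \o (fun _ : R => K)).
Proof. by apply: (@integ_c _ (fun _ : R => K)) => x; exact: cvg_cst. Qed.

Lemma integ_qK (d K : R) :
  mu.-integrable `[0, 1] (EFin \o (fun x : R => d * (x ^+ 2 / 2) - K)).
Proof.
apply: (@integ_c _ (fun x : R => d * (x ^+ 2 / 2) - K)) => x.
by apply: cvgB; [apply: cvgMl_tmp; exact: (@cont_q R) | exact: cvg_cst].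
Qed.

Lemma integ_q_K (K : R) :
  mu.-integrable `[0, 1] (EFin \o (fun x : R => x ^+ 2 / 2 - K)).
Proof.
apply: (@integ_c _ (fun x : R => x ^+ 2 / 2 - K)) => x.
by apply: cvgB; [exact: (@cont_q R) | exact: cvg_cst].
Qed.

Lemma integ_dq (d : R) :
  mu.-integrable `[0, 1] (EFin \o (fun x : R => d * (x ^+ 2 / 2))).
Proof.
apply: (@integ_c _ (fun x : R => d * (x ^+ 2 / 2))) => x.
by apply: cvgMl_tmp; exact: (@cont_q R).
Qed.

Lemma integ_bb g1 g2 :
  mu.-integrable `[0, 1] (EFin \o (fun x : R => bidE g2 x - bidE g1 x)).
Proof.
apply: (@integ_c _ (fun x : R => bidE g2 x - bidE g1 x)) => x.
by apply: cvgB; [exact: (@cont_bidE _ g2)| exact: (@cont_bidE _ g1)].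
Qed.

Lemma bidE_le g v : 0 < g -> bidE g v <= v ^+ 2 / 2.
Proof.
move=> g0; have a0 := sqrt_pos g0; rewrite /bidE /mstar.
move: (Num.sqrt g) a0 => a a0.
have C0 : 0 <= v ^+ 2 / 2 by rewrite divr_ge0 // sqr_ge0.
rewrite ge_max C0 /= ler_pdivrMr; last lra.
have : 0 <= a * (v ^+ 2 / 2) by rewrite mulr_ge0 // ltW.
nra.
Qed.

Lemma lin_id a C : 0 < a -> (a * C - 1) / (a + 1) = C - (C + 1) / (a + 1).
Proof. by move=> a0; field; rewrite gt_eqF //; lra. Qed.

Lemma bidE_ge g v : 0 < g ->
  v ^+ 2 / 2 - (v ^+ 2 / 2 + 1) / (Num.sqrt g + 1) <= bidE g v.
Proof.
move=> g0; have a0 := sqrt_pos g0; rewrite /bidE /mstar.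
move: (Num.sqrt g) a0 => a a0.
by rewrite le_max -lin_id // lexx orbT.
Qed.

Lemma bE_le g : 0 < g -> bE g <= 6^-1.
Proof.
move=> g0; rewrite -(@int_q R) /bE; apply: le_Rintegral => //.
- by have := integ_c (@cont_bidE _ g).
- by have := integ_c (@cont_q R).
- by move=> x _; exact: bidE_le.
Qed.

Lemma bE_ge g : 0 < g -> 6^-1 - 3 / 2 / (Num.sqrt g + 1) <= bE g.
Proof.
move=> g0; have a0 := sqrt_pos g0.
set K := 3 / 2 / (Num.sqrt g + 1).
have -> : 6^-1 - K = Rintegral mu `[0, 1] (fun x => x ^+ 2 / 2 - K).
  rewrite RintegralB //; last by have := integ_cst K.
    by rewrite (@int_q R) Rintegral_cst // mu01 mulr1.
  by have := integ_c (@cont_q R).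
rewrite /bE; apply: le_Rintegral => //.
- by have := integ_q_K K.
- by have := integ_c (@cont_bidE _ g).
- move=> x; rewrite /= in_itv /= => /andP[x0 x1].
  apply: le_trans (bidE_ge x g0).
  rewrite lerD2l lerN2 /K ler_pM2r ?invr_gt0; last lra.
  have : x ^+ 2 <= 1 by rewrite expr_le1.
  lra.
Qed.

Lemma pw a b C : 8 <= a -> a < b -> 0 <= C -> C <= 2^-1 ->
  ((a + 1)^-1 - (b + 1)^-1) * C - ((a + 1)^-1 - (b + 1)^-1) / 8 <=
  Num.max 0 (C - (C + 1) / (b + 1)) - Num.max 0 (C - (C + 1) / (a + 1)).
Proof.
move=> a8 ab C0 C1.
have a1 : 0 < a + 1 by lra.
have b1 : 0 < b + 1 by lra.
set d := (a + 1)^-1 - (b + 1)^-1.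
have d0 : 0 < d by rewrite /d subr_gt0 ltf_pV2 ?posrE; lra.
set y2 := C - (C + 1) / (b + 1).
have m2a : y2 <= Num.max 0 y2 by rewrite le_max lexx orbT.
have m2b : 0 <= Num.max 0 y2 by rewrite le_max lexx.
have yd : y2 - (C - (C + 1) / (a + 1)) = (C + 1) * d.
  by rewrite /y2 /d; field; rewrite !gt_eqF.
have [h|h] := leP (C - (C + 1) / (a + 1)) 0.
- have h' : C * (a + 1) <= C + 1.
    by rewrite -ler_pdivlMr //; lra.
  have C8 : C <= 8^-1.
    have : C * 8 <= 1 by nra.
    by rewrite -[8^-1]mul1r ler_pdivlMr.
  have : d * C - d / 8 <= 0.
    rewrite -mulrBr; apply: mulr_ge0_le0; first exact: ltW.
    lra.
  lra.
- have : d * C - d / 8 <= (C + 1) * d.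
    have : 0 <= d * (1 + 8^-1) by rewrite mulr_ge0 // ltW.
    nra.
  lra.
Qed.

Lemma bE_strict g1 g2 : 64 <= g1 -> g1 < g2 -> bE g1 < bE g2.
Proof.
move=> g1h g12.
have g10 : 0 < g1 by lra.
have g20 : 0 < g2 by lra.
have a8 : 8 <= Num.sqrt g1.
  have e64 : (64 : R) = 8 ^+ 2 by rewrite expr2; lra.
  have s64 : Num.sqrt (64 : R) = 8 by rewrite e64 sqrtr_sqr ger0_norm.
  by rewrite -s64 ler_sqrt //; lra.
have a12 : Num.sqrt g1 < Num.sqrt g2 by rewrite ltr_sqrt.
rewrite -subr_gt0 /bE -RintegralB //; last 2 first.
  by have := integ_c (@cont_bidE _ g2).
  by have := integ_c (@cont_bidE _ g1).
set d := (Num.sqrt g1 + 1)^-1 - (Num.sqrt g2 + 1)^-1.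
have d0 : 0 < d.
  by rewrite subr_gt0 ltf_pV2 ?posrE; lra.
have low : d * 6^-1 - d / 8 <= Rintegral mu `[0, 1] (fun x => bidE g2 x - bidE g1 x).
  have -> : d * 6^-1 - d / 8 = Rintegral mu `[0, 1] (fun x => d * (x ^+ 2 / 2) - d / 8).
    rewrite RintegralB //; first last.
    - by have := integ_cst (d / 8).
    - by have := integ_dq d.
    by rewrite RintegralZl ?(@int_q R) ?Rintegral_cst ?mu01 ?mulr1 //; by have := integ_c (@cont_q R).
  apply: le_Rintegral => //.
  - by have := integ_qK d (d / 8).
  - by have := integ_bb g1 g2.
  - move=> x; rewrite /= in_itv /= => /andP[x0 x1].
    rewrite /bidE /mstar /d !lin_id ?sqrt_pos //.
    apply: pw => //.
      by rewrite divr_ge0 // sqr_ge0.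
    by rewrite ler_pdivrMr // mulVf // expr_le1.
have : 0 < d * 6^-1 - d / 8 by rewrite -mulrBr mulr_gt0 //; lra.
lra.
Qed.

End Final.
Unset Implicit Arguments.
Theorem proposition6 (R : realType) :
  (forall g : R, 0 < g -> exists bid lat : R -> R, is_selected_eq g bid lat) /\
  (forall bid lat : R -> R -> R,
     (forall g : R, 0 < g -> is_selected_eq g (bid g) (lat g)) ->
     (exp_bid (bid g) @[g --> +oo] --> (1 / 6 : R)) /\
     (exists G : R, forall g1 g2 : R, G < g1 -> g1 < g2 ->
        exp_bid (bid g1) < exp_bid (bid g2))).
Proof.
split.
  by move=> g g0; exists (bidE g), (latE g); exact: existence.
move=> bid lat H.
have eqb : forall g : R, 0 < g -> exp_bid (bid g) = bE g.
  by move=> g g0; rewrite (exp_bid_eq g0 (H g g0)).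
split; last first.
  exists 64 => g1 g2 h1 h2.
  rewrite !eqb; try lra.
  apply: bE_strict => //; lra.
apply/cvgrPdist_lt => e e0.
set M := (3 / 2 / e) ^+ 2.
have M0 : 0 <= M by rewrite sqr_ge0.
near=> g.
have gM : M < g by near: g; apply: nbhs_pinfty_gt; rewrite num_real.
have g0 : 0 < g by lra.
rewrite eqb //.
have hl := bE_ge g0; have hu := bE_le g0.
have a0 := sqrt_pos g0.
have k0 : 0 < 3 / 2 / e by rewrite divr_gt0.
have aM : 3 / 2 / e < Num.sqrt g.
  by rewrite -(ger0_norm (ltW k0)) -sqrtr_sqr ltr_sqrt.
have Ke : 3 / 2 / (Num.sqrt g + 1) < e.
  rewrite ltr_pdivrMr; last lra.
  move: aM; rewrite ltr_pdivrMr // => aM.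
  nra.
rewrite div1r ger0_norm; last lra.
lra.
Unshelve. all: by end_near.
Qed.
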